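(* Let $G$ be a graph that does not belong to $\mathcal{G}^{\rm SSP}$. Then: (1) the tensor product $G\times H$ does not belong to $\mathcal{G}^{\rm SSP}$ for any graph $H$; (2) for every positive integer $m$, the corona graph $G\odot K_{m-1}^c$ does not belong to $\mathcal{G}^{\rm SSP}$.
   Context: All graphs are finite, simple, undirected. For a graph $G$ with vertex set $\{1,\ldots,n\}$, $\mathcal{S}(G)$ is the set of all real symmetric $n\times n$ matrices $A=(a_{ij})$ such that for $i\neq j$, $a_{ij}\neq 0$ if and only if $\{i,j\}$ is an edge of $G$ (diagonal entries are arbitrary). A real symmetric matrix $A$ has the strong spectral property (SSP) if the only real symmetric matrix $X$ with $A\circ X=0$, $I\circ X=0$ and $AX-XA=0$ is $X=0$ (here $\circ$ is the entrywise product). $\mathcal{G}^{\rm SSP}$ is the set of graphs $G$ such that every matrix in $\mathcal{S}(G)$ has the SSP. The tensor product $G\times H$ has vertex set $V(G)\times V(H)$, with $(u,u')$ adjacent to $(v,v')$ iff $\{u,v\}\in E(G)$ and $\{u',v'\}\in E(H)$. $K_{m-1}^c$ is the edgeless graph on $m-1$ vertices. For $V(G)=\{v_1,\ldots,v_n\}$, the corona $G\odot H$ is obtained by taking $G$ and $n$ disjoint copies of $H$ and joining $v_i$ to every vertex of the $i$-th copy of $H$, for each $i$. *)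

(* Defs.v *)
From HB Require Import structures.
From mathcomp Require Import all_boot all_order all_algebra.
From Stdlib Require Import Reals.
From mathcomp Require Import Rstruct.
Unset Printing Implicit Defensive.
Import Order.TTheory GRing.Theory Num.Theory.
Local Open Scope ring_scope.

Record graph := Graph {
  vert : finType;
  adj : rel vert;
  adj_sym : symmetric adj;
  adj_irr : irreflexive adj }.

Arguments adj {_} _ _.

(* Matrices associated with G are indexed by 'I_#|vert G|, vertex i being
   enum_val i (a fixed labelling 1..n of the vertices). *)
Definition vx {G : graph} (i : 'I_#|vert G|) : vert G := enum_val i.

Definition inS (G : graph) (A : 'M[R]_#|vert G|) : Prop :=
  A^T = A /\
  forall i j : 'I_#|vert G|, i != j -> (A i j != 0) = adj (vx i) (vx j).



Definition SSP {n : nat} (A : 'M[R]_n) : Prop :=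
  forall X : 'M[R]_n,
    X^T = X ->
    (forall i j, A i j * X i j = 0) ->
    (forall i, X i i = 0) ->
    A *m X - X *m A = 0 ->
    X = 0.

Definition GSSP (G : graph) : Prop :=
  forall A : 'M[R]_#|vert G|, inS G A -> SSP A.

Definition tensor_adj (G H : graph) : rel (vert G * vert H) :=
  fun x y => adj x.1 y.1 && adj x.2 y.2.

Lemma tensor_adj_sym G H : symmetric (tensor_adj G H).
Proof. by move=> x y; rewrite /tensor_adj [adj x.1 _]adj_sym [adj x.2 _]adj_sym. Qed.

Lemma tensor_adj_irr G H : irreflexive (tensor_adj G H).
Proof. by move=> x; rewrite /tensor_adj adj_irr. Qed.

Definition tensor (G H : graph) : graph :=
  Graph (vert G * vert H)%type (tensor_adj G H)
    (tensor_adj_sym G H) (tensor_adj_irr G H).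

Definition edgeless (k : nat) : graph :=
  Graph 'I_k (fun _ _ => false) (fun _ _ => erefl) (fun _ => erefl).

(* Corona G o H: vertices of G (inl v) and, for each v in G, a copy of H
   (inr (v, w)); v is joined to every vertex of its copy. *)
Definition corona_adj (G H : graph) : rel (vert G + (vert G * vert H)) :=
  fun x y =>
    match x, y with
    | inl u, inl v => adj u v
    | inl u, inr (v, _) => u == v
    | inr (u, _), inl v => u == v
    | inr (u, w), inr (v, w') => (u == v) && adj w w'
    end.

Lemma corona_adj_sym G H : symmetric (corona_adj G H).
Proof.
move=> [u|[u w]] [v|[v w']] /=.
- exact: adj_sym.
- by rewrite eq_sym.
- by rewrite eq_sym.
- by rewrite eq_sym adj_sym.
Qed.

Lemma corona_adj_irr G H : irreflexive (corona_adj G H).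
Proof. by move=> [u|[u w]] /=; rewrite adj_irr ?andbF. Qed.

Definition corona (G H : graph) : graph :=
  Graph (vert G + (vert G * vert H))%type (corona_adj G H)
    (corona_adj_sym G H) (corona_adj_irr G H).

(* Main.v *)
Require Import Defs.
From HB Require Import structures.
From mathcomp Require Import all_boot all_order all_algebra.
From Stdlib Require Import Reals Classical.
From mathcomp Require Import Rstruct.
Import Order.TTheory GRing.Theory Num.Theory.
Local Open Scope ring_scope.

Section Bridge.
Variable G : graph.
Local Notation V := (vert G).
Local Notation n := #|vert G|.

Definition mxv (f : V -> V -> R) : 'M[R]_n := \matrix_(i, j) f (vx i) (vx j).

Lemma sum_vx (F : V -> R) : \sum_(k < n) F (vx k) = \sum_z F z.
Proof. by rewrite (big_enum_val (A := predT) F). Qed.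

Lemma mxv_mul f g i j :
  (mxv f *m mxv g) i j = \sum_z f (vx i) z * g z (vx j).
Proof.
rewrite !mxE -sum_vx; apply: eq_bigr => k _; by rewrite !mxE.
Qed.

Lemma vx_inj : injective (@vx G).
Proof. exact: enum_val_inj. Qed.

Lemma vx_rank (u : V) : vx (enum_rank u) = u.
Proof. by rewrite /vx enum_rankK. Qed.

Lemma nonGSSP_of_fun (b x : V -> V -> R) :
  (forall u v, b u v = b v u) ->
  (forall u v, x u v = x v u) ->
  (forall u v, u != v -> (b u v != 0) = adj u v) ->
  (forall u v, b u v * x u v = 0) ->
  (forall u, x u u = 0) ->
  (forall u w, \sum_z b u z * x z w = \sum_z x u z * b z w) ->
  (exists u v, x u v != 0) ->
  ~ GSSP G.
Proof.
move=> bs xs bp bx xd bc [u0 [v0 nz]] HG.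
have HA : inS G (mxv b).
  split.
    by apply/matrixP => i j; rewrite !mxE bs.
  move=> i j ij; rewrite mxE bp //.
  by apply: contra ij => /eqP /vx_inj ->.
have X0 : mxv x = 0.
  apply: (HG _ HA).
  - by apply/matrixP => i j; rewrite !mxE xs.
  - by move=> i j; rewrite !mxE bx.
  - by move=> i; rewrite !mxE xd.
  - apply/matrixP => i j; move: (mxv_mul b x i j) (mxv_mul x b i j).
    by rewrite !mxE => -> ->; rewrite bc subrr.
have : (mxv x : 'M_n) (enum_rank u0) (enum_rank v0) = x u0 v0.
  by rewrite mxE !vx_rank.
by rewrite X0 mxE => E; rewrite -E eqxx in nz.
Qed.
End Bridge.
Section Extract.
Variable G : graph.
Local Notation V := (vert G).
Local Notation n := #|vert G|.

Lemma fun_of_nonGSSP : ~ GSSP G ->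
  exists (a x : V -> V -> R),
  (forall u v, a u v = a v u) /\
      (forall u v, x u v = x v u) /\
      (forall u v, u != v -> (a u v != 0) = adj u v) /\
      (forall u v, a u v * x u v = 0) /\
      (forall u, x u u = 0) /\
      (forall u w, \sum_z a u z * x z w = \sum_z x u z * a z w) /\
      (exists u v, x u v != 0).
Proof.
move=> nG.
have [A HA] : exists A, ~ (inS G A -> SSP A).
  by apply: not_all_ex_not => H; apply: nG => A; apply: H.
have [IA nS] : inS G A /\ ~ SSP A.
  by split; [apply: NNPP => h; apply: HA => /h | move=> h; apply: HA].
have [X HX] : exists X, ~ (X^T = X -> (forall i j, A i j * X i j = 0) ->
    (forall i, X i i = 0) -> A *m X - X *m A = 0 -> X = 0).
  by apply: not_all_ex_not => H; apply: nS => X; apply: H.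
have [Xs [AX [Xd [C nz]]]] : X^T = X /\ (forall i j, A i j * X i j = 0) /\
    (forall i, X i i = 0) /\ A *m X - X *m A = 0 /\ X <> 0.
  by do 4 (split; first (apply: NNPP => h; apply: HX => *; exfalso; exact: h)); 
     move=> h; apply: HX => *.
case: IA => As Ap.
pose r := @enum_rank V.
exists (fun u v => A (r u) (r v)), (fun u v => X (r u) (r v)); do ! split.
- by move=> u v; rewrite -{1}As mxE.
- by move=> u v; rewrite -{1}Xs mxE.
- move=> u v uv; rewrite Ap; first by rewrite !vx_rank.
  by apply: contra uv => /eqP /(congr1 (@enum_val _ _)); rewrite !enum_rankK => ->.
- by move=> u v; apply: AX.
- by move=> u; apply: Xd.
- move=> u w; have := congr1 (fun M : 'M[R]_n => M (r u) (r w)) C.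
  rewrite !mxE => /eqP; rewrite subr_eq0 => /eqP.
  have sv : forall F : 'I_n -> R, \sum_k F k = \sum_z F (r z).
    by move=> F; rewrite -sum_vx; apply: eq_bigr => k _; rewrite /r /vx enum_valK.
  by rewrite !sv.
- apply: NNPP => h; apply: nz; apply/matrixP => i j; rewrite mxE.
  apply: NNPP => hij; apply: h; exists (vx i), (vx j).
  by rewrite /r !/vx !enum_valK; apply/eqP.
Qed.
End Extract.
Lemma sum_if_eq (T : finType) (j : T) (c : R) :
  \sum_i (if i == j then c else 0) = c.
Proof. by rewrite -big_mkcond big_pred1_eq. Qed.

Section Corona.
Variable G : graph.
Variable k : nat.
Local Notation V := (vert G).
Local Notation G' := (corona G (edgeless k)).
Local Notation V' := (vert G').

Variables a x : V -> V -> R.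

Definition cb (z1 z2 : V') : R :=
  match z1, z2 with
  | inl u, inl v => a u v
  | inl u, inr (v, _) => if u == v then 1 else 0
  | inr (u, _), inl v => if u == v then 1 else 0
  | inr _, inr _ => 0
  end.

Definition cx (z1 z2 : V') : R :=
  match z1, z2 with
  | inl u, inl v => x u v
  | inr (u, j), inr (v, l) => if j == l then x u v else 0
  | _, _ => 0
  end.

Lemma corona_nonGSSP :
  (forall u v, a u v = a v u) ->
  (forall u v, x u v = x v u) ->
  (forall u v, u != v -> (a u v != 0) = adj u v) ->
  (forall u v, a u v * x u v = 0) ->
  (forall u, x u u = 0) ->
  (forall u w, \sum_z a u z * x z w = \sum_z x u z * a z w) ->
  (exists u v, x u v != 0) ->
  ~ GSSP G'.
Proof.
move=> As Xs Ap AX Xd C [u0 [v0 nz]].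
apply: (@nonGSSP_of_fun G' cb cx).
- by case=> [u|[u j]] [v|[v l]] //=; rewrite ?As // eq_sym.
- by case=> [u|[u j]] [v|[v l]] //=; rewrite Xs eq_sym.
- case=> [u|[u j]] [v|[v l]] //= uv.
  + by apply: Ap; apply: contra uv => /eqP ->.
  + by case: (u =P v); rewrite ?oner_eq0 ?eqxx.
  + by case: (u =P v); rewrite ?oner_eq0 ?eqxx.
  + by rewrite eqxx andbF.
- by case=> [u|[u j]] [v|[v l]] //=; rewrite ?mulr0 ?mul0r.
- by case=> [u|[u j]] //=; rewrite eqxx.
- case=> [u|[u j]] [v|[v l]]; rewrite !big_sumType /=.
  + rewrite C [X in _ + X]big1 ?[X in _ = _ + X]big1 //.
      by case=> w i _ /=; rewrite mul0r.
    by case=> w i _ /=; rewrite mulr0.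
  + rewrite [X in X + _]big1 ?add0r; last by move=> w _; rewrite mulr0.
    rewrite [X in _ = _ + X]big1 ?addr0; last by case=> w i _; rewrite mulr0.
    transitivity (x u v).
      rewrite -(@sum_if_eq _ (u, l) (x u v)); apply: eq_bigr => [[w i]] _ /=.
      rewrite xpair_eqE; case: (u =P w) => [<-|uw]; rewrite ?mul1r ?mul0r.
        by rewrite eqxx.
      by case: (w =P u) => // wu; exfalso; apply: uw; rewrite wu.
    rewrite -(@sum_if_eq _ v (x u v)); apply: eq_bigr => w _ /=.
    by case: (w =P v) => [->|_]; rewrite ?mulr1 ?mulr0.
  + rewrite [X in _ + X]big1 ?addr0; last by case=> w i _; rewrite mul0r.
    rewrite [X in _ = X + _]big1 ?add0r; last by move=> w _; rewrite mul0r.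
    transitivity (x u v).
      rewrite -(@sum_if_eq _ u (x u v)); apply: eq_bigr => w _ /=.
      by case: (u =P w) => [->|uw]; rewrite ?eqxx ?mul1r // mul0r; case: (w =P u) => // wu; exfalso; apply: uw; rewrite wu.
    rewrite -(@sum_if_eq _ (v, j) (x u v)); apply: eq_bigr => [[w i]] _ /=.
    rewrite xpair_eqE; case: (w =P v) => [->|wv]; rewrite ?mulr1 ?mulr0.
      by rewrite /= eq_sym.
    by [].
  + rewrite !big1 ?addr0 //; (move=> [? ?] _ || move=> ? _); by rewrite /= ?mulr0 ?mul0r.
- by exists (inl u0), (inl v0).
Qed.
End Corona.
From mathcomp Require Import complex spectral sesquilinear.

Lemma real_sym_eigen n (M : 'M[R]_n) : (0 < n)%nat -> M^T = M ->
  exists l : R, exists2 r : 'rV[R]_n, r *m M = l *: r & r != 0.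
Proof.
move=> n0 Ms.
pose f := real_complex R.
pose Mc := map_mx f M.
have Mreal : Mc \is a realmx.
  by apply/mxOverP => i j; rewrite mxE complex_real.
have Msym : Mc \is symmetricmx.
  apply/is_hermitianmxP; rewrite expr0 scale1r map_mx_id // /Mc map_trmx Ms.
  by [].
have Mh := realsym_hermsym Msym Mreal.
have /orthomx_spectralP Mdec := hermitian_normalmx Mh.
have spr := hermitian_spectral_diag_real Mh.
set P := spectralmx Mc in Mdec.
set d := spectral_diag Mc in Mdec spr.
pose i := Ordinal n0.
have : eigenvalue Mc (d 0 i).
  apply/eigenvalueP; exists ('e_i *m P).
    rewrite Mdec !mulmxA mulmxK ?spectral_unit //.
    by rewrite -(rowE i (diag_mx d)) row_diag_mx -scalemxAl.
  rewrite mulmx_free_eq0 ?row_free_unit ?spectral_unit //.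
  apply/eqP => /matrixP /(_ 0 i); rewrite !mxE !eqxx /=.
  by move/eqP; rewrite oner_eq0.
have /complex_realP [l ->] : d 0 i \is Num.real by apply: (mxOverP spr).
rewrite eigenvalue_root_char /Mc -map_char_poly fmorph_root -eigenvalue_root_char.
by move/eigenvalueP => [r Hr rn0]; exists l, r.
Qed.
From mathcomp Require Import ring.
Local Open Scope ring_scope.

Lemma eigen_graph (H : graph) : (0 < #|vert H|)%nat ->
  exists (l : R) (y : vert H -> R),
    (forall c, \sum_d (if adj c d then 1 else 0) * y d = l * y c) /\
    (exists c, y c != 0).
Proof.
move=> n0.
pose M : 'M[R]_#|vert H| := @mxv H (fun c d => if adj c d then 1 else 0).
have Ms : M^T = M by apply/matrixP => i j; rewrite !mxE adj_sym.
have [l [r Hr rn0]] := real_sym_eigen _ _ n0 Ms.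
exists l, (fun d => r 0 (enum_rank d)); split.
  move=> c; have := congr1 (fun N : 'rV_#|vert H| => N 0 (enum_rank c)) Hr.
  rewrite /= !mxE => <-; rewrite -(sum_vx H); apply: eq_bigr => k _.
  by rewrite /vx enum_valK !mxE /vx enum_rankK adj_sym mulrC.
apply: NNPP => h; apply/negP: rn0; apply/negPn/eqP/matrixP => i j.
rewrite ord1 mxE; apply: NNPP => hj; apply: h; exists (vx j).
by rewrite /vx enum_valK; apply/eqP.
Qed.

Section Tensor.
Variables G H : graph.
Local Notation V := (vert G).
Local Notation W := (vert H).
Variables a x : V -> V -> R.
Variable l : R.
Variable y : W -> R.
Local Notation m0 := (fun c d : W => if adj c d then GRing.one R else 0).

Definition tb (p q : vert (tensor G H)) :=
  (if p.1 == q.1 then (if p.2 == q.2 then l * a p.1 p.1 else 0)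
  else a p.1 q.1 * m0 p.2 q.2).

Definition tx (p q : vert (tensor G H)) := x p.1 q.1 * (y p.2 * y q.2).

Lemma tensor_nonGSSP :
  (forall u v, a u v = a v u) ->
  (forall u v, x u v = x v u) ->
  (forall u v, u != v -> (a u v != 0) = adj u v) ->
  (forall u v, a u v * x u v = 0) ->
  (forall u, x u u = 0) ->
  (forall u w, \sum_z a u z * x z w = \sum_z x u z * a z w) ->
  (exists u v, x u v != 0) ->
  (forall c, \sum_d m0 c d * y d = l * y c) ->
  (exists c, y c != 0) ->
  ~ GSSP (tensor G H).
Proof.
move=> As Xs Ap AX Xd C [u0 [v0 nz]] Ey [c0 yc0].
apply: (@nonGSSP_of_fun (tensor G H) tb tx).
- case=> u u' [v v']; rewrite /tb /=.
  case: (u =P v) => [->|uv]; first by rewrite eqxx eq_sym.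
  by case: (v =P u) => [vu|_]; [case: uv | rewrite As adj_sym].
- case=> u u' [v v']; rewrite /tx /= Xs; ring.
- case=> u u' [v v'] /= uv; rewrite /tb /= /tensor_adj /=.
  case: (u =P v) => [uv0|/eqP uv'].
    subst v; rewrite adj_irr /=; suff -> : (u' == v') = false by rewrite eqxx.
    by apply: contraNF uv => /eqP <-.
  rewrite mulf_eq0 negb_or Ap //; congr (_ && _).
  by case: (adj u' v'); rewrite ?oner_eq0 ?eqxx.
- case=> u u' [v v']; rewrite /tb /tx /=.
  case: (u =P v) => [<-|_]; first by rewrite Xd mul0r mulr0.
  by rewrite mulrACA AX mul0r.
- by case=> u u'; rewrite /tx /= Xd mul0r.
- have L1 : forall u u' v v' w,
    \sum_w' tb (u, u') (w, w') * tx (w, w') (v, v') =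
    l * y u' * y v' * (a u w * x w v).
    move=> u u' v v' w; rewrite /tb /tx /=.
    case: (u =P w) => [<-|uw].
      transitivity (l * a u u * (x u v * (y u' * y v'))); last by ring.
      rewrite -[RHS](@sum_if_eq _ u').
      apply: eq_bigr => w' _; rewrite eq_sym; case: (w' =P u') => [->|_].
        by [].
      by rewrite mul0r.
    transitivity (a u w * x w v * y v' * \sum_w' m0 u' w' * y w').
      rewrite big_distrr; apply: eq_bigr => w' _ /=. move: (if adj _ _ then _ else _) => t; ring.
    by rewrite Ey; ring.
  have L2 : forall u u' v v' w,
    \sum_w' tx (u, u') (w, w') * tb (w, w') (v, v') =
    l * y u' * y v' * (x u w * a w v).
    move=> u u' v v' w; rewrite /tb /tx /=.
    case: (w =P v) => [->|wv].
      transitivity (l * a v v * (x u v * (y u' * y v'))); last by ring.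
      rewrite -[RHS](@sum_if_eq _ v').
      apply: eq_bigr => w' _; case: (w' =P v') => [->|_] /=; first by ring.
      by rewrite mulr0.
    transitivity (x u w * a w v * y u' * \sum_w' m0 v' w' * y w').
      by rewrite big_distrr; apply: eq_bigr => w' _ /=; rewrite [adj w' v']adj_sym; move: (if adj _ _ then _ else _) => t; ring.
    by rewrite Ey; ring.
  move=> [u u'] [v v'].
  transitivity (\sum_w \sum_w' tb (u,u') (w,w') * tx (w,w') (v,v')).
    by rewrite pair_bigA; apply: eq_bigr => [[w w']] _.
  transitivity (\sum_w \sum_w' tx (u,u') (w,w') * tb (w,w') (v,v')); last first.
    by rewrite pair_bigA; apply: eq_bigr => [[w w']] _.
  under eq_bigr => w _ do rewrite L1.
  under [RHS]eq_bigr => w _ do rewrite L2.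
  by rewrite -!big_distrr /= C.
- exists (u0, c0), (v0, c0); rewrite /tx /=.
  by rewrite mulf_neq0 // mulf_neq0.
Qed.
End Tensor.

Local Close Scope ring_scope.
Local Close Scope ring_scope.
Theorem corollary2p3 (G : graph) :
  ~ GSSP G ->
  (forall H : graph, (0 < #|vert H|)%N -> ~ GSSP (tensor G H)) /\
  (forall m : nat, (0 < m)%N -> ~ GSSP (corona G (edgeless m.-1))).
Proof.
move=> nG.
have [a [x [As [Xs [Ap [AX [Xd [C nz]]]]]]]] := fun_of_nonGSSP G nG.
split.
  move=> H nH.
  have [l [y [Ey ny]]] := eigen_graph H nH.
  exact: (@tensor_nonGSSP G H a x l y As Xs Ap AX Xd C nz Ey ny).
move=> m _.
exact: (@corona_nonGSSP G m.-1 a x As Xs Ap AX Xd C nz).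
Qed.
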